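(* Over profiles whose ballots are strict weak orders (ties allowed), let $F$ be a VSCC satisfying Downward Homogeneity, Coherent Defeat, and Tolerant Positive Involvement. Then $F(\mathbf P)\subseteq SC(\mathbf P)$ for every profile $\mathbf P$.
   Context: Profiles: $\mathbf P:V\to\mathcal W(X)$, $V$ nonempty finite set of voters, $X=X(\mathbf P)$ nonempty finite set of candidates (from fixed infinite sets), $\mathcal W(X)$ the strict weak orders on $X$ (ties allowed). ''Ranks $x$ above $y$'' means strictly. $\mathrm{Margin}_{\mathbf P}(x,y)$ = #voters with $x$ strictly above $y$ minus #voters with $y$ strictly above $x$; $x$ majority preferred to $y$ if $>0$. Majority path: sequence with positive consecutive margins; strength = minimum of these. $(x,y)\in sc(\mathbf P)$ iff $\mathrm{Margin}_{\mathbf P}(x,y)>0$ exceeds the strength of every majority path from $y$ to $x$; $SC(\mathbf P)$ = set of $y$ with no $x$ such that $(x,y)\in sc(\mathbf P)$. A VSCC is $F$ with $\varnothing\ne F(\mathbf P)\subseteq X(\mathbf P)$. Downward Homogeneity: $F(\mathbf P)\subseteq F(2\mathbf P)$ ($2\mathbf P$ duplicates each voter). Coherent Defeat: $\mathrm{Margin}_{\mathbf P}(x,y)>0$ and no majority path from $y$ to $x$ imply $y\notin F(\mathbf P)$. Tolerant Positive Involvement: if $x\in F(\mathbf P)$ and $\mathbf P'$ adds one new voter who ranks $x$ strictly above every other candidate $y$ to which $x$ is not majority preferred in $\mathbf P$, then $x\in F(\mathbf P')$. *)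

(* Defs.v *)
From HB Require Import structures.
From mathcomp Require Import all_boot all_order all_algebra.
From mathcomp Require Import finmap.
Set Implicit Arguments. Unset Strict Implicit. Unset Printing Implicit Defensive.
Import Order.TTheory GRing.Theory Num.Theory.
Local Open Scope fset_scope.

Definition strict_weak_order (X : {fset nat}) (R : nat -> nat -> bool) : Prop :=
  [/\ (forall x, x \in X -> ~~ R x x),
      (forall x y z, x \in X -> y \in X -> z \in X -> R x y -> R y z -> R x z)
    & (forall x y z, x \in X -> y \in X -> z \in X -> R x z -> R x y || R y z)].

(* A profile: nonempty finite voter set, nonempty finite candidate set, and for
   each voter a strict weak order on the candidates.  [ballot i x y] means
   voter i ranks x strictly above y; it is false outside voters/candidates, so a
   profile is determined by its voters, candidates and ballots. *)
Record profile := Profile {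
  voters : {fset nat};
  cands : {fset nat};
  ballot : nat -> nat -> nat -> bool;
  voters_ne : voters != fset0;
  cands_ne : cands != fset0;
  ballot_dom : forall i x y, ballot i x y -> [/\ i \in voters, x \in cands & y \in cands];
  ballot_swo : forall i, i \in voters -> strict_weak_order cands (ballot i)
}.

Definition margin (P : profile) (x y : nat) : int :=
  (#|` [fset i in voters P | ballot P i x y]|%:Z
   - #|` [fset i in voters P | ballot P i y x]|%:Z)%R.

Definition majority_path (P : profile) (a : nat) (s : seq nat) (b : nat) : Prop :=
  path (fun u v => (0 < margin P u v)%R) a s /\ last a s = b.

Definition path_strength (P : profile) (a : nat) (s : seq nat) : int :=
  let ms := pairmap (margin P) a s in foldr Order.min (head 0%R ms) ms.

Definition sc (P : profile) (x y : nat) : Prop :=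
  (0 < margin P x y)%R /\
  forall s, majority_path P y s x -> (path_strength P y s < margin P x y)%R.

Definition in_SC (P : profile) (y : nat) : Prop :=
  y \in cands P /\ forall x, ~ sc P x y.

Definition VSCC (F : profile -> {fset nat}) : Prop :=
  forall P, F P != fset0 /\ F P `<=` cands P.

(* Q is 2P: voter i of P is duplicated into voters 2i and 2i+1 of Q. *)
Definition is_double (P Q : profile) : Prop :=
  [/\ cands Q = cands P,
      (forall j, (j \in voters Q) = (j./2 \in voters P))
    & (forall j, ballot Q j = ballot P j./2)].

Definition downward_homogeneity (F : profile -> {fset nat}) : Prop :=
  forall P Q, is_double P Q -> F P `<=` F Q.

Definition coherent_defeat (F : profile -> {fset nat}) : Prop :=
  forall P x y, (0 < margin P x y)%R -> (forall s, ~ majority_path P y s x) ->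
    y \notin F P.

Definition tolerant_adds (P P' : profile) (x : nat) : Prop :=
  cands P' = cands P /\
  exists i, [/\ i \notin voters P,
     voters P' = i |` voters P,
     (forall j, j != i -> ballot P' j = ballot P j)
   & (forall y, y \in cands P -> y != x -> ~~ (0 < margin P x y)%R ->
        ballot P' i x y)].

Definition tolerant_positive_involvement (F : profile -> {fset nat}) : Prop :=
  forall P P' x, x \in F P -> tolerant_adds P P' x -> x \in F P'.

(* Main.v *)
Require Import Defs.
From mathcomp Require Import all_boot all_order all_algebra.
From mathcomp Require Import finmap zify.
From Stdlib Require Import ClassicalEpsilon.
Set Implicit Arguments. Unset Strict Implicit. Unset Printing Implicit Defensive.
Import Order.TTheory GRing.Theory Num.Theory.
Local Open Scope fset_scope.

Lemma margin_anti P a b : margin P a b = (- margin P b a)%R.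
Proof. by rewrite /margin opprB. Qed.

Lemma margin_pos_cands P a b : (0 < margin P a b)%R -> a \in cands P /\ b \in cands P.
Proof.
rewrite /margin.
case: (boolP [exists i : voters P, ballot P (val i) a b]).
  by case/existsP=> i /ballot_dom [].
move=> /existsPn H.
have -> : [fset i in voters P | ballot P i a b] = fset0.
  apply/fsetP=> j; rewrite !inE; apply/negP=> /andP[jV B].
  by have := H [` jV]; rewrite B.
by rewrite cardfs0; lia.
Qed.

Lemma margin_xx P a : margin P a a = 0%R.
Proof. by rewrite /margin subrr. Qed.

Lemma foldr_min_ge (m d : int) (l : seq int) :
  (m <= d)%R -> all (fun t => m <= t)%R l -> (m <= foldr Order.min d l)%R.
Proof.
move=> hd; elim: l => //= t l IH /andP[ht hl].
by rewrite le_min ht IH.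
Qed.

Lemma strength_ge P (m : int) a s : s != [::] ->
  path (fun u v => m <= margin P u v)%R a s -> (m <= path_strength P a s)%R.
Proof.
move=> sne hp.
have hall : all (fun t => m <= t)%R (pairmap (margin P) a s).
  elim: s a hp {sne} => //= b s IH a /andP[h1 h2]; by rewrite h1 IH.
rewrite /path_strength; apply: foldr_min_ge => //.
case: s sne hp hall => //= b s _ _ /andP[] //.
Qed.

Lemma nopath (P : profile) (c : nat -> bool) :
  (forall u v, u \in cands P -> v \in cands P -> ~~ c u -> c v -> (margin P u v <= 0)%R) ->
  forall s a, ~~ c a -> path (fun u v => 0 < margin P u v)%R a s -> c (last a s) -> False.
Proof.
move=> H; elim=> [|b s IH] a /= ha; first by move=> _ hc; rewrite hc in ha.
case/andP=> hab hp hl.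
case: (boolP (c b)) => cb.
  have [ca cb'] := margin_pos_cands hab.
  by have := H a b ca cb' ha cb; rewrite leNgt hab.
exact: IH cb hp hl.
Qed.
Section Add.
Variables (P : profile) (i : nat) (r : nat -> nat -> bool).
Hypothesis Hd : forall a b, r a b -> a \in cands P /\ b \in cands P.
Hypothesis Hs : strict_weak_order (cands P) r.

Definition add_ballot j := if j == i then r else ballot P j.

Lemma add_ne : i |` voters P != fset0.
Proof. apply/eqP=> H; have := fsetU11 i (voters P); by rewrite H inE. Qed.

Lemma add_dom j x y : add_ballot j x y -> [/\ j \in i |` voters P, x \in cands P & y \in cands P].
Proof.
rewrite /add_ballot; case: eqP => [->|_].
  by case/Hd=> ??; split=> //; exact: fsetU11.
by case/ballot_dom=> ???; split=> //; rewrite inE; apply/orP; right.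
Qed.

Lemma add_swo j : j \in i |` voters P -> strict_weak_order (cands P) (add_ballot j).
Proof.
rewrite /add_ballot; case: eqP => [_|ne] // H.
apply: ballot_swo; move: H; rewrite !inE; case/orP=> // /eqP; done.
Qed.

Definition add_voter : profile :=
  @Profile (i |` voters P) (cands P) add_ballot add_ne (cands_ne P) add_dom add_swo.

Hypothesis Hi : i \notin voters P.

Lemma add_card a b :
  #|` [fset j in voters add_voter | ballot add_voter j a b]| =
  (r a b + #|` [fset j in voters P | ballot P j a b]|)%N.
Proof.
rewrite /=.
case: (boolP (r a b)) => rab.
  have -> : [fset j in i |` voters P | add_ballot j a b] =
           i |` [fset j in voters P | ballot P j a b].
    apply/fsetP=> j; rewrite !inE /add_ballot.
    case: eqP => [->|ne] /=; first by rewrite rab.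
    by [].
  rewrite cardfsU1 !inE (negbTE Hi) /=; done.
have -> : [fset j in i |` voters P | add_ballot j a b] =
           [fset j in voters P | ballot P j a b].
  apply/fsetP=> j; rewrite !inE /add_ballot.
  case: eqP => [->|ne] /=; first by rewrite (negbTE rab) (negbTE Hi).
  by [].
done.
Qed.

Lemma add_margin a b :
  margin add_voter a b = (margin P a b + (r a b : nat)%:Z - (r b a : nat)%:Z)%R.
Proof. rewrite /margin !add_card; lia. Qed.

Lemma add_tolerant x :
  (forall y, y \in cands P -> y != x -> ~~ (0 < margin P x y)%R -> r x y) ->
  tolerant_adds P add_voter x.
Proof.
move=> H; split=> //; exists i; split=> //.
- by move=> j /negbTE; rewrite /= /add_ballot => ->.
- move=> y yc yx nm; rewrite /= /add_ballot eqxx; exact: H.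
Qed.
End Add.

Definition fresh (s : seq nat) := (foldr maxn 0 s).+1.
Lemma fresh_notin (s : seq nat) : fresh s \notin s.
Proof.
suff H : forall x, x \in s -> x <= foldr maxn 0 s.
  by apply/negP=> /H; rewrite /fresh ltnn.
elim: s => //= a s IH x; rewrite inE; case/orP=> [/eqP->|/IH]; lia.
Qed.
Section Dbl.
Variable P : profile.
Definition dvoters : {fset nat} :=
  [fset i.*2 | i in voters P] `|` [fset i.*2.+1 | i in voters P].

Lemma half_dbl i : (i.*2)./2 = i. Proof. by rewrite doubleK. Qed.
Lemma half_dblS i : (i.*2.+1)./2 = i. Proof. by rewrite -[_.+1]add1n halfD odd_double doubleK. Qed.

Lemma in_dvoters j : (j \in dvoters) = (j./2 \in voters P).
Proof.
apply/idP/idP.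
  rewrite inE; case/orP=> /imfsetP[i /= iV ->]; by rewrite ?half_dbl ?half_dblS.
move=> H; rewrite inE; apply/orP.
have := odd_double_half j; case: (odd j) => /= E.
  right; apply/imfsetP; exists j./2 => //; rewrite -E; lia.
left; apply/imfsetP; exists j./2 => //; rewrite -E; lia.
Qed.

Lemma dvoters_ne : dvoters != fset0.
Proof.
case/fset0Pn: (voters_ne P) => i iV.
apply/fset0Pn; exists i.*2; by rewrite in_dvoters half_dbl.
Qed.

Definition dballot j := ballot P j./2.

Lemma d_dom j x y : dballot j x y -> [/\ j \in dvoters, x \in cands P & y \in cands P].
Proof. by case/ballot_dom=> ???; rewrite in_dvoters. Qed.

Lemma d_swo j : j \in dvoters -> strict_weak_order (cands P) (dballot j).
Proof. by rewrite in_dvoters; apply: ballot_swo. Qed.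

Definition dprofile : profile :=
  @Profile dvoters (cands P) dballot dvoters_ne (cands_ne P) d_dom d_swo.

Lemma d_is_double : is_double P dprofile.
Proof. split=> //; exact: in_dvoters. Qed.

Lemma d_card a b : #|` [fset j in voters dprofile | ballot dprofile j a b]| =
   (#|` [fset j in voters P | ballot P j a b]|).*2.
Proof.
set A := [fset j in voters P | ballot P j a b].
have -> : [fset j in voters dprofile | ballot dprofile j a b] =
   [fset i.*2 | i in A] `|` [fset i.*2.+1 | i in A].
  apply/fsetP=> j; rewrite /= !inE /dballot.
  have := in_dvoters j; rewrite inE => ->.
  apply/idP/idP.
    move=> /andP[H1 H2]; apply/orP.
    have := odd_double_half j; case: (odd j) => /= E.
      right; apply/imfsetP; exists j./2; first by rewrite /= /A !inE H1 H2.
      rewrite -E; lia.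
    left; apply/imfsetP; exists j./2; first by rewrite /= /A !inE H1 H2.
    rewrite -E; lia.
  case/orP=> /imfsetP[i /=]; rewrite /A !inE => H ->; by rewrite ?half_dbl ?half_dblS.
rewrite cardfsU.
have -> : [fset i.*2 | i in A] `&` [fset i.*2.+1 | i in A] = fset0.
  apply/fsetP=> j; rewrite !inE; apply/negP=> /andP[/imfsetP[i1 _ ->] /imfsetP[i2 _ E]].
  move: E; lia.
rewrite cardfs0 subn0 !card_imfset //=; first by rewrite -addnn.
- move=> u v; lia.
- move=> u v; lia.
Qed.

Lemma d_margin a b : margin dprofile a b = (margin P a b *+ 2)%R.
Proof. rewrite /margin !d_card -!muln2; lia. Qed.
End Dbl.

Section Tier.
Variables (P : profile) (y : nat) (c : nat -> bool).
Definition tier z : nat :=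
  if z == y then 1 else if c z then (if (0 < margin P y z)%R then 0 else 2) else 3.
Definition tball a b := [&& a \in cands P, b \in cands P & tier a < tier b].

Lemma tball_dom a b : tball a b -> a \in cands P /\ b \in cands P.
Proof. by case/and3P. Qed.

Lemma tball_swo : strict_weak_order (cands P) tball.
Proof.
split.
- by move=> x _; rewrite /tball ltnn !andbF.
- move=> a b d ha hb hd; rewrite /tball ha hb hd /=; exact: ltn_trans.
- move=> a b d ha hb hd; rewrite /tball ha hb hd /= => h.
  case: (ltnP (tier a) (tier b)) => //= h2; apply: leq_ltn_trans h2 h.
Qed.
End Tier.

Lemma step (F : profile -> {fset nat}) (P : profile) y c :
  VSCC F -> tolerant_positive_involvement F -> y \in F P ->
  exists P', [/\ y \in F P', cands P' = cands P &
    forall a b, a \in cands P -> b \in cands P ->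
      margin P' a b = (margin P a b + (tier P y c a < tier P y c b : nat)%:Z
                        - (tier P y c b < tier P y c a : nat)%:Z)%R].
Proof.
move=> hV hT hy.
have yc : y \in cands P by have [_ /fsubsetP] := hV P; apply.
pose i := fresh (voters P).
have hi : i \notin voters P by exact: (fresh_notin (voters P)).
exists (@add_voter P i (tball P y c) (@tball_dom P y c) (tball_swo P y c)).
split=> //.
- apply: hT hy _; apply: (add_tolerant _ _ hi) => z zc zy hm.
  rewrite /tball yc zc /tier eqxx (negbTE zy) (negbTE hm).
  by case: (c z).
- move=> a b ha hb; rewrite (add_margin _ _ hi) /tball ha hb //.
Qed.

Lemma tier_y P (y : nat) (c : nat -> bool) : tier P y c y = 1.
Proof. by rewrite /tier eqxx. Qed.
Lemma tier_out P (y : nat) (c : nat -> bool) z : z != y -> ~~ c z -> tier P y c z = 3.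
Proof. by move=> /negbTE h /negbTE h'; rewrite /tier h h'. Qed.
Lemma tier_in P (y : nat) (c : nat -> bool) z : z != y -> c z ->
  tier P y c z = if (0 < margin P y z)%R then 0 else 2.
Proof. by move=> /negbTE h h'; rewrite /tier h h'. Qed.

Lemma iter (F : profile -> {fset nat}) (Q : profile) x y (c : nat -> bool) n :
  VSCC F -> tolerant_positive_involvement F -> y \in F Q -> c x -> ~~ c y ->
  margin Q x y = Posz (2 * n + 2) ->
  (forall u v, u \in cands Q -> v \in cands Q -> ~~ c u -> c v ->
     (margin Q u v <= Posz (2 * n))%R) ->
  (forall v, exists j : int, margin Q y v = (2 * j)%R) ->
  forall k, k <= 2 * n -> exists Pk, [/\ y \in F Pk, cands Pk = cands Q,
    margin Pk x y = (Posz (2 * n + 2) - Posz k)%R &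
    forall u v, u \in cands Q -> v \in cands Q -> ~~ c u -> c v ->
     ((margin Pk u v <= Posz (2 * n) - Posz k)%R \/ (u = y /\ (margin Pk u v <= 1)%R)) /\
     (u = y -> exists j : int, (margin Pk u v + Posz k = 2 * j)%R)].
Proof.
move=> hV hT hy hcx hcy hxy0 hcut hev.
have xy : x != y by apply/eqP=> E; move: hcy; rewrite -E hcx.
have [xc yc] : x \in cands Q /\ y \in cands Q by apply: margin_pos_cands; rewrite hxy0; lia.
elim=> [|k IH] hk.
  exists Q; split=> //; first by rewrite hxy0; lia.
  move=> u v uc vc hu hv; split; first by left; have := hcut u v uc vc hu hv; lia.
  move=> ->; have [j hj] := hev v; exists j; rewrite hj; lia.
have [Pk [hyk hck hxy hinv]] := IH (ltnW hk).
have [P' [hy' hc' hm']] := step c hV hT hyk.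
exists P'; split=> //; first by rewrite hc'.
  have hyx : ~~ (0 < margin Pk y x)%R by rewrite margin_anti hxy; lia.
  rewrite hm' ?hck // tier_y tier_in // (negbTE hyx) /= hxy; lia.
move=> u v uc vc hu hv.
have vy : v != y by apply/eqP=> E; move: hcy; rewrite -E hv.
have [h1 h2] := hinv u v uc vc hu hv.
rewrite hm' ?hck //.
case: (eqVneq u y) => [E|uy].
  subst u; rewrite tier_y tier_in //; have [j hj] := h2 erefl.
  case: ifP => h /=.
    split; last by exists j; lia.
    case: h1 => [h1|[_ h1]]; [left|right; split=> //]; lia.
  split; last by exists (j + 1)%R; lia.
  by right; split => //; lia.
rewrite tier_out // tier_in //.
case: h1 => [h1|[E _]]; last by rewrite E eqxx in uy.
split; last by move=> E; rewrite E eqxx in uy.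
by left; case: ifP => _ /=; lia.
Qed.

Theorem theorem7p9 (F : profile -> {fset nat}) :
  VSCC F -> downward_homogeneity F -> coherent_defeat F ->
  tolerant_positive_involvement F ->
  forall P y, y \in F P -> in_SC P y.
Proof.
move=> hV hDH hCD hT P y hy.
have yc : y \in cands P by have [_ /fsubsetP] := hV P; apply.
split=> // x [hpos hsc].
have [n hn] : exists n, margin P x y = Posz n.+1.
  move: hpos; case: (margin P x y) => [[|n]|n] //= _; by exists n.
pose reach z := exists s, path (fun u v => (margin P x y <= margin P u v)%R) z s /\ last z s = x.
pose c z : bool := if excluded_middle_informative (reach z) then true else false.
have cP z : c z <-> reach z by rewrite /c; case: excluded_middle_informative.
have hcx : c x by apply/cP; exists [::].
have hcy : ~~ c y.
  apply/negP=> /cP [s [hp hl]].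
  have sne : s != [::].
    by apply/eqP=> E; move: hl hpos; rewrite E /= => ->; rewrite margin_xx ltxx.
  have hm : majority_path P y s x.
    split=> //; apply: sub_path hp => u v /= h; exact: lt_le_trans hpos h.
  have := hsc s hm; have := strength_ge sne hp; lia.
have hcut u v : ~~ c u -> c v -> (margin P u v < margin P x y)%R.
  move=> hu /cP [s [hp hl]]; rewrite ltNge; apply/negP=> h.
  move/negP: hu; apply; apply/cP; exists (v :: s); split=> //=; by rewrite h.
pose Q := dprofile P.
have hyQ : y \in F Q by apply: (fsubsetP (hDH P Q (d_is_double P))).
have hxyQ : margin Q x y = Posz (2 * n + 2) by rewrite d_margin hn; lia.
have hcutQ u v : u \in cands Q -> v \in cands Q -> ~~ c u -> c v ->
    (margin Q u v <= Posz (2 * n))%R.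
  move=> _ _ hu hv; have := hcut u v hu hv; rewrite d_margin hn; lia.
have hevQ v : exists j : int, margin Q y v = (2 * j)%R.
  by exists (margin P y v); rewrite d_margin; lia.
have [Pk [hyk hck hxy hinv]] :=
  iter hV hT hyQ hcx hcy hxyQ hcutQ hevQ (leqnn (2 * n)).
have : y \notin F Pk.
  apply: (hCD Pk x y); first by rewrite hxy; lia.
  move=> s [hp hl].
  apply: (@nopath Pk c _ s y hcy hp); last by rewrite hl.
  move=> u v uc vc hu hv; rewrite hck in uc vc.
  have [h1 h2] := hinv u v uc vc hu hv.
  case: h1 => [h1|[E h1]]; first by lia.
  have [j hj] := h2 E; lia.
by rewrite hyk.
Qed.
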